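(* The two-sided ideal $(z')=z'U^+$ is completely prime, i.e. $U^+/(z')$ is a domain.
   Context: $\Bbbk$ is an algebraically closed field of characteristic zero and $q\in\Bbbk^\times$ is not a root of unity. $U^+$ is the $\Bbbk$-algebra generated by $e_1,e_2$ with relations (S1) $e_1^2e_2-(q^2+q^{-2})e_1e_2e_1+e_2e_1^2=0$ and (S2) $e_2^3e_1-(q^2+1+q^{-2})e_2^2e_1e_2+(q^2+1+q^{-2})e_2e_1e_2^2-e_1e_2^3=0$. Set $e_3=e_1e_2-q^2e_2e_1$, $w=e_2e_3-e_3e_2$, $z'=e_1w-q^{-4}we_1$ (a central element). *)

(* Defs.v *)
From mathcomp Require Import all_boot all_order all_algebra.
Set Implicit Arguments. Unset Strict Implicit. Unset Printing Implicit Defensive.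
Import GRing.Theory.
Local Open Scope ring_scope.

(* Elements of the free associative unital k-algebra k<e1,e2>, as syntax. *)
Inductive term (k : Type) : Type :=
| TC of k
| TE1 | TE2
| TAdd of term k & term k
| TMul of term k & term k.
Arguments TE1 {k}. Arguments TE2 {k}.

Section Terms.
Variable k : fieldType.
Definition tscale (c : k) (t : term k) := TMul (TC c) t.
Definition tsub (a b : term k) := TAdd a (tscale (-1) b).

Variable q : k.
Definition S1 : term k :=
  TAdd (tsub (TMul TE1 (TMul TE1 TE2)) (tscale (q^+2 + q^-2) (TMul TE1 (TMul TE2 TE1))))
       (TMul TE2 (TMul TE1 TE1)).
Definition S2 : term k :=
  tsub (TAdd (tsub (TMul TE2 (TMul TE2 (TMul TE2 TE1)))
                   (tscale (q^+2 + 1 + q^-2) (TMul TE2 (TMul TE2 (TMul TE1 TE2)))))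
             (tscale (q^+2 + 1 + q^-2) (TMul TE2 (TMul TE1 (TMul TE2 TE2)))))
       (TMul TE1 (TMul TE2 (TMul TE2 TE2))).
Definition e3 : term k := tsub (TMul TE1 TE2) (tscale (q^+2) (TMul TE2 TE1)).
Definition w : term k := tsub (TMul TE2 e3) (TMul e3 TE2).
Definition z' : term k := tsub (TMul TE1 w) (tscale (q^-4) (TMul w TE1)).

Definition relator (t : term k) : Prop := t = S1 \/ t = S2 \/ t = z'.

(* The smallest congruence on terms making them a unital associative
   k-algebra (k central) in which every relator is 0; i.e. equality in
   k<e1,e2>/(S1,S2,z') = U^+/(z'). *)
Inductive UQ_eq : term k -> term k -> Prop :=
| UQ_refl t : UQ_eq t t
| UQ_sym a b : UQ_eq a b -> UQ_eq b a
| UQ_trans a b c : UQ_eq a b -> UQ_eq b c -> UQ_eq a c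
| UQ_add_cong a a' b b' : UQ_eq a a' -> UQ_eq b b' -> UQ_eq (TAdd a b) (TAdd a' b')
| UQ_mul_cong a a' b b' : UQ_eq a a' -> UQ_eq b b' -> UQ_eq (TMul a b) (TMul a' b')
| UQ_addA a b c : UQ_eq (TAdd a (TAdd b c)) (TAdd (TAdd a b) c)
| UQ_addC a b : UQ_eq (TAdd a b) (TAdd b a)
| UQ_add0 a : UQ_eq (TAdd a (TC 0)) a
| UQ_addN a : UQ_eq (TAdd a (tscale (-1) a)) (TC 0)
| UQ_mulA a b c : UQ_eq (TMul a (TMul b c)) (TMul (TMul a b) c)
| UQ_mul1l a : UQ_eq (TMul (TC 1) a) a
| UQ_mul1r a : UQ_eq (TMul a (TC 1)) a
| UQ_mulDl a b c : UQ_eq (TMul (TAdd a b) c) (TAdd (TMul a c) (TMul b c))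
| UQ_mulDr a b c : UQ_eq (TMul a (TAdd b c)) (TAdd (TMul a b) (TMul a c))
| UQ_add_const (x y : k) : UQ_eq (TAdd (TC x) (TC y)) (TC (x + y))
| UQ_mulC_const (x y : k) : UQ_eq (TMul (TC x) (TC y)) (TC (x * y))
| UQ_central (x : k) a : UQ_eq (TMul (TC x) a) (TMul a (TC x))
| UQ_rel r : relator r -> UQ_eq r (TC 0).
End Terms.

(* Main.v *)
From HB Require Import structures.
Require Import Defs.
From mathcomp Require Import all_boot all_order all_algebra.
From mathcomp Require Import generic_quotient.
From mathcomp Require Import boolp.
From mathcomp Require Import ring zify.
From Stdlib Require Import FunctionalExtensionality.
Set Implicit Arguments. Unset Strict Implicit. Unset Printing Implicit Defensive.
Import GRing.Theory.
Local Open Scope ring_scope.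
Local Open Scope quotient_scope.

Section QuotRing.
Variable k : fieldType.
Variable q : k.

Fixpoint enc (t : term k) : GenTree.tree k :=
  match t with
  | TC c => GenTree.Leaf c
  | TE1 => GenTree.Node 0 [::]
  | TE2 => GenTree.Node 1 [::]
  | TAdd a b => GenTree.Node 2 [:: enc a; enc b]
  | TMul a b => GenTree.Node 3 [:: enc a; enc b]
  end.
Fixpoint dec (x : GenTree.tree k) : option (term k) :=
  match x with
  | GenTree.Leaf c => Some (TC c)
  | GenTree.Node 0 [::] => Some TE1
  | GenTree.Node 1 [::] => Some TE2
  | GenTree.Node 2 [:: a; b] => match dec a, dec b with Some a, Some b => Some (TAdd a b) | _, _ => None end
  | GenTree.Node 3 [:: a; b] => match dec a, dec b with Some a, Some b => Some (TMul a b) | _, _ => None end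
  | _ => None
  end.
Lemma encK : pcancel enc dec. Proof. by elim=> //= a -> b ->. Qed.
HB.instance Definition _ := Choice.copy (term k) (pcan_type encK).

Definition uqr (a b : term k) : bool := `[< UQ_eq q a b >].
Lemma uqrP a b : reflect (UQ_eq q a b) (uqr a b).
Proof. exact: asboolP. Qed.
Lemma uqr_refl : reflexive uqr. Proof. by move=> a; apply/uqrP; constructor. Qed.
Lemma uqr_sym : symmetric uqr.
Proof. by move=> a b; apply/uqrP/uqrP; apply: UQ_sym. Qed.
Lemma uqr_trans : transitive uqr.
Proof. by move=> b a c /uqrP H1 /uqrP H2; apply/uqrP; apply: UQ_trans H1 H2. Qed.
Canonical uqr_equiv := EquivRel uqr uqr_refl uqr_sym uqr_trans.
Definition Q := {eq_quot uqr_equiv}.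
HB.instance Definition _ := Choice.on Q.
Definition pQ (t : term k) : Q := \pi_Q t.
Lemma pQ_eq a b : pQ a = pQ b <-> UQ_eq q a b.
Proof. split; [move/eqmodP/uqrP|move=> H; apply/eqmodP/uqrP]; done. Qed.
Lemma pQK a : UQ_eq q (repr (pQ a)) a.
Proof. by apply/pQ_eq; rewrite /pQ reprK. Qed.
Local Notation U := (UQ_eq q).
Definition zeroQ : Q := pQ (TC 0).
Definition oneQ : Q := pQ (TC 1).
Definition addQ (x y : Q) : Q := pQ (TAdd (repr x) (repr y)).
Definition oppQ (x : Q) : Q := pQ (tscale (-1) (repr x)).
Definition mulQ (x y : Q) : Q := pQ (TMul (repr x) (repr y)).
Lemma addQE a b : addQ (pQ a) (pQ b) = pQ (TAdd a b).
Proof. apply/pQ_eq; apply: UQ_add_cong; apply: pQK. Qed.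
Lemma mulQE a b : mulQ (pQ a) (pQ b) = pQ (TMul a b).
Proof. apply/pQ_eq; apply: UQ_mul_cong; apply: pQK. Qed.
Lemma oppQE a : oppQ (pQ a) = pQ (tscale (-1) a).
Proof. apply/pQ_eq; apply: UQ_mul_cong; [constructor|apply: pQK]. Qed.
Lemma pQ_ind (P : Q -> Prop) : (forall t, P (pQ t)) -> forall x, P x.
Proof. by move=> H; apply: quotW. Qed.
Lemma addQA : associative addQ.
Proof. by elim/pQ_ind=> a; elim/pQ_ind=> b; elim/pQ_ind=> c; rewrite !addQE; apply/pQ_eq; constructor. Qed.
Lemma addQC : commutative addQ.
Proof. by elim/pQ_ind=> a; elim/pQ_ind=> b; rewrite !addQE; apply/pQ_eq; constructor. Qed.
Lemma add0Q : left_id zeroQ addQ.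
Proof. elim/pQ_ind=> a; rewrite addQE; apply/pQ_eq.
by apply: UQ_trans (UQ_addC _ _ _) (UQ_add0 _ _). Qed.
Lemma addNQ : left_inverse zeroQ oppQ addQ.
Proof. elim/pQ_ind=> a; rewrite oppQE addQE; apply/pQ_eq.
by apply: UQ_trans (UQ_addC _ _ _) (UQ_addN _ _). Qed.
Lemma mulQA : associative mulQ.
Proof. by elim/pQ_ind=> a; elim/pQ_ind=> b; elim/pQ_ind=> c; rewrite !mulQE; apply/pQ_eq; constructor. Qed.
Lemma mul1Q : left_id oneQ mulQ.
Proof. by elim/pQ_ind=> a; rewrite mulQE; apply/pQ_eq; constructor. Qed.
Lemma mulQ1 : right_id oneQ mulQ.
Proof. by elim/pQ_ind=> a; rewrite mulQE; apply/pQ_eq; constructor. Qed.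
Lemma mulQDl : left_distributive mulQ addQ.
Proof. by elim/pQ_ind=> a; elim/pQ_ind=> b; elim/pQ_ind=> c; rewrite !(addQE, mulQE); apply/pQ_eq; constructor. Qed.
Lemma mulQDr : right_distributive mulQ addQ.
Proof. by elim/pQ_ind=> a; elim/pQ_ind=> b; elim/pQ_ind=> c; rewrite !(addQE, mulQE); apply/pQ_eq; constructor. Qed.
HB.instance Definition _ := GRing.isPzRing.Build Q addQA addQC add0Q addNQ mulQA mul1Q mulQ1 mulQDl mulQDr.

Definition sc (c : k) : Q := pQ (TC c).
Lemma pQ_add a b : pQ (TAdd a b) = pQ a + pQ b. Proof. by rewrite -addQE. Qed.
Lemma pQ_mul a b : pQ (TMul a b) = pQ a * pQ b. Proof. by rewrite -mulQE. Qed.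
Lemma scD a b : sc (a + b) = sc a + sc b.
Proof. rewrite /sc -pQ_add; apply/pQ_eq; apply: UQ_sym; apply: UQ_add_const. Qed.
Lemma scM a b : sc (a * b) = sc a * sc b.
Proof. rewrite /sc -pQ_mul; apply/pQ_eq; apply: UQ_sym; apply: UQ_mulC_const. Qed.
Lemma sc1 : sc 1 = 1. Proof. by []. Qed.
Lemma sc0 : sc 0 = 0. Proof. by []. Qed.
Lemma scC c x : sc c * x = x * sc c.
Proof. by elim/pQ_ind: x => t; rewrite /sc -!pQ_mul; apply/pQ_eq; constructor. Qed.
Lemma scN1 x : sc (-1) * x = - x.
Proof. by elim/pQ_ind: x => t; rewrite /sc -!pQ_mul; rewrite [RHS]oppQE. Qed.
Lemma scN c : sc (- c) = - sc c.
Proof. by rewrite -mulN1r scM scN1. Qed.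
Lemma scB a b : sc (a - b) = sc a - sc b.
Proof. by rewrite scD scN. Qed.
Lemma pQ_scale c t : pQ (tscale c t) = sc c * pQ t. Proof. by rewrite /tscale pQ_mul. Qed.
Lemma pQ_sub a b : pQ (tsub a b) = pQ a - pQ b.
Proof. by rewrite /tsub pQ_add pQ_scale scN1. Qed.
Lemma pQ_rel r : relator q r -> pQ r = 0.
Proof. by move=> H; apply/pQ_eq; constructor. Qed.
End QuotRing.

Local Close Scope quotient_scope.


Section Rels.
Variable k : fieldType.
Variable q : k.
Hypothesis q0 : q != 0.
Hypothesis hp1 : q ^+ 2 != 1.
Hypothesis hp2 : q ^+ 4 != 1.
Local Notation Q := (Q q).
Local Notation pQ := (@pQ k q).
Local Notation sc := (@sc k q).

Lemma mulr_sc (x y : Q) c : x * (sc c * y) = sc c * (x * y).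
Proof. by rewrite mulrA -scC mulrA. Qed.

Lemma add4ACA (V : zmodType) (a b c d a' b' c' d' : V) :
  a + b + c + d + (a' + b' + c' + d') = (a + a') + (b + b') + (c + c') + (d + d').
Proof. by rewrite addrACA (addrACA (a + b)) (addrACA a). Qed.

Lemma nzA : 1 + -1 * q ^+ 2 != 0.
Proof. by rewrite mulN1r subr_eq0 eq_sym. Qed.
Lemma nzB : 1 + -1 * q ^+ 4 != 0.
Proof. by rewrite mulN1r subr_eq0 eq_sym. Qed.
Lemma nzC : 1 + q ^+ 2 != 0.
Proof.
apply: contra nzB => /eqP H.
have -> : 1 + -1 * q ^+ 4 = (1 + q ^+ 2) * (1 - q ^+ 2) by ring.
by rewrite H mul0r.
Qed.
Ltac side := rewrite ?q0 ?nzA ?nzB ?nzC /=; try done.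

Lemma mulr_scsc a b (y : Q) : sc a * (sc b * y) = sc (a * b) * y.
Proof. by rewrite mulrA scM. Qed.

Definition L4 (A B C D : Q) (v : k * k * k * k) : Q :=
  sc v.1.1.1 * A + sc v.1.1.2 * B + sc v.1.2 * C + sc v.2 * D.
Section L4.
Variables A B C D : Q.
Local Notation L := (L4 A B C D).
Lemma L4_add v w : L v + L w = L (v.1.1.1 + w.1.1.1, v.1.1.2 + w.1.1.2, v.1.2 + w.1.2, v.2 + w.2).
Proof.
by rewrite /L4 /= !scD !mulrDl add4ACA.
Qed.
Lemma L4_scale c v : sc c * L v = L (c * v.1.1.1, c * v.1.1.2, c * v.1.2, c * v.2).
Proof. by rewrite /L4 /= !mulrDr !mulrA !scM. Qed.
Lemma L4_opp v : - L v = L (- v.1.1.1, - v.1.1.2, - v.1.2, - v.2).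
Proof. by rewrite -scN1 L4_scale !mulN1r. Qed.
Lemma L4_sub v w : L v - L w = L (v.1.1.1 - w.1.1.1, v.1.1.2 - w.1.1.2, v.1.2 - w.1.2, v.2 - w.2).
Proof. by rewrite L4_opp L4_add. Qed.
Lemma L4_A : A = L (1, 0, 0, 0). Proof. by rewrite /L4 /= sc1 sc0 !mul0r mul1r !addr0. Qed.
Lemma L4_B : B = L (0, 1, 0, 0). Proof. by rewrite /L4 /= sc1 sc0 !mul0r mul1r add0r !addr0. Qed.
Lemma L4_C : C = L (0, 0, 1, 0). Proof. by rewrite /L4 /= sc1 sc0 !mul0r mul1r !add0r addr0. Qed.
Lemma L4_D : D = L (0, 0, 0, 1). Proof. by rewrite /L4 /= sc1 sc0 !mul0r mul1r !add0r. Qed.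
Lemma L4_eq a b c d a' b' c' d' : a = a' -> b = b' -> c = c' -> d = d' -> L (a,b,c,d) = L (a',b',c',d').
Proof. by move=> -> -> -> ->. Qed.
End L4.

Definition X1 : Q := pQ TE1.
Definition X2 : Q := pQ TE2.
Definition p := q ^+ 2.
Fact X3_key : unit. Proof. by []. Qed.
Definition X3 : Q := locked_with X3_key (X1 * X2 - sc p * (X2 * X1)).
Lemma X3E : X3 = X1 * X2 - sc p * (X2 * X1). Proof. by rewrite /X3 unlock. Qed.
Fact XW_key : unit. Proof. by []. Qed.
Definition XW : Q := locked_with XW_key (X2 * X3 - X3 * X2).
Lemma XWE : XW = X2 * X3 - X3 * X2. Proof. by rewrite /XW unlock. Qed.
Lemma pQ_e3 : pQ (e3 q) = X3.
Proof. by rewrite /e3 pQ_sub pQ_scale !pQ_mul X3E. Qed.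
Lemma pQ_w : pQ (w q) = XW.
Proof. by rewrite /w pQ_sub !pQ_mul pQ_e3 XWE. Qed.

Lemma R1 : X3 * X1 = sc p * (X1 * X3).
Proof.
have H := pQ_rel (or_introl (erefl (S1 q))).
rewrite /S1 pQ_add pQ_sub pQ_scale !pQ_mul -/X1 -/X2 in H.
apply/eqP; rewrite -subr_eq0; apply/eqP.
have -> : 0 = sc (- p) * 0 by rewrite mulr0.
rewrite -{}H X3E.
rewrite ?(mulrBl, mulrBr, mulrDl, mulrDr) -?mulrA ?(mulr_scsc, mulr_sc).
idtac.
move: (X1 * (X1 * X2)) (X1 * (X2 * X1)) (X2 * (X1 * X1)) => A B C.
pose L := L4 A B C 0.
have hA : A = L (1,0,0,0) by exact: L4_A.
have hB : B = L (0,1,0,0) by exact: L4_B.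
have hC : C = L (0,0,1,0) by exact: L4_C.
rewrite hA hB hC /L.
rewrite !(L4_scale, L4_sub, L4_add, L4_opp); apply: L4_eq; rewrite /p /=; field; side.
Qed.


Lemma R0 : X2 * X1 = sc (p^-1) * (X1 * X2) - sc (p^-1) * X3.
Proof.
rewrite X3E ?(mulrBl, mulrBr, mulrDl, mulrDr) -?mulrA ?(mulr_scsc, mulr_sc).
move: (X1 * X2) (X2 * X1) => A B.
pose L := L4 A B 0 0.
have hA : A = L (1,0,0,0) by exact: L4_A.
have hB : B = L (0,1,0,0) by exact: L4_B.
rewrite hA hB /L.
rewrite !(L4_scale, L4_sub, L4_add, L4_opp); apply: L4_eq; rewrite /p /=; field; side.
Qed.

Lemma R2 : XW * X1 = sc (p ^+ 2) * (X1 * XW).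
Proof.
have H := pQ_rel (or_intror (or_intror (erefl (z' q)))).
rewrite /z' pQ_sub pQ_scale !pQ_mul pQ_w -/X1 in H.
apply/eqP; rewrite -subr_eq0; apply/eqP.
have -> : 0 = sc (- p ^+ 2) * 0 by rewrite mulr0.
rewrite -{}H.
move: XW => W.
rewrite ?(mulrBl, mulrBr, mulrDl, mulrDr) -?mulrA ?(mulr_scsc, mulr_sc).
move: (X1 * W) (W * X1) => A B.
pose L := L4 A B 0 0.
have hA : A = L (1,0,0,0) by exact: L4_A.
have hB : B = L (0,1,0,0) by exact: L4_B.
rewrite hA hB /L.
rewrite !(L4_scale, L4_sub, L4_add, L4_opp); apply: L4_eq; rewrite /p /=; field; side.
Qed.

Lemma R5 : X2 * XW = sc p * (XW * X2).
Proof.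
have H := pQ_rel (or_intror (or_introl (erefl (S2 q)))).
rewrite /S2 !pQ_sub pQ_add pQ_sub !pQ_scale !pQ_mul -/X1 -/X2 in H.
apply/eqP; rewrite -subr_eq0; apply/eqP.
have -> : 0 = sc (- p) * 0 by rewrite mulr0.
rewrite -{}H XWE X3E.
rewrite ?(mulrBl, mulrBr, mulrDl, mulrDr) -?mulrA ?(mulr_scsc, mulr_sc).
move: (X2 * (X2 * (X2 * X1))) (X2 * (X2 * (X1 * X2))) (X2 * (X1 * (X2 * X2))) (X1 * (X2 * (X2 * X2))) => A B C D.
pose L := L4 A B C D.
have hA : A = L (1,0,0,0) by exact: L4_A.
have hB : B = L (0,1,0,0) by exact: L4_B.
have hC : C = L (0,0,1,0) by exact: L4_C.
have hD : D = L (0,0,0,1) by exact: L4_D.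
rewrite hA hB hC hD /L.
rewrite !(L4_scale, L4_sub, L4_add, L4_opp); apply: L4_eq; rewrite /p /=; field; side.
Qed.

Lemma R3pre : XW * X1 = X1 * XW + sc (p^-1 - 1) * (X3 * X3).
Proof.
rewrite {1}XWE mulrBl -!mulrA R1 R0 mulr_sc [X2 * (X1 * X3)]mulrA R0.
rewrite ?(mulrBl, mulrBr, mulrDl, mulrDr) -?mulrA ?(mulr_scsc, mulr_sc).
rewrite [X3 * (X1 * X2)]mulrA R1 -mulrA.
rewrite XWE ?(mulrBl, mulrBr, mulrDl, mulrDr) -?mulrA ?(mulr_scsc, mulr_sc).
move: (X1 * (X2 * X3)) (X1 * (X3 * X2)) (X3 * X3) => A B C.
pose L := L4 A B C 0.
have hA : A = L (1,0,0,0) by exact: L4_A.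
have hB : B = L (0,1,0,0) by exact: L4_B.
have hC : C = L (0,0,1,0) by exact: L4_C.
rewrite hA hB hC /L.
rewrite !(L4_scale, L4_sub, L4_add, L4_opp); apply: L4_eq; rewrite /p /=; field; side.
Qed.

Definition kap := - (p * (p + 1)).
Lemma R3 : X3 * X3 = sc kap * (X1 * XW).
Proof.
have H := R3pre; rewrite R2 in H.
have H' : sc (p^-1 - 1) * (X3 * X3) = sc (p ^+ 2) * (X1 * XW) - X1 * XW.
  by rewrite H addrAC subrr add0r.
have hp : p^-1 - 1 != 0.
  rewrite subr_eq0 invr_eq1; exact: hp1.
rewrite -[X3 * X3]mul1r -sc1 -(mulVf hp) scM -mulrA H'.
move: (X1 * XW) => A.
pose L := L4 A 0 0 0.
have hA : A = L (1,0,0,0) by exact: L4_A.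
rewrite hA /L.
rewrite !(L4_scale, L4_sub, L4_add, L4_opp); apply: L4_eq; rewrite /kap /p /=; field; side.
Qed.

Lemma R6 : X2 * X3 = X3 * X2 + XW.
Proof. by rewrite XWE addrC subrK. Qed.

Lemma R4 : XW * X3 = sc p * (X3 * XW).
Proof.
rewrite {1}XWE mulrBl -!mulrA R3 R6 mulr_sc [X2 * (X1 * XW)]mulrA R0.
rewrite mulrDr [X3 * (X3 * X2)]mulrA R3.
rewrite ?(mulrBl, mulrBr, mulrDl, mulrDr) -?mulrA ?(mulr_scsc, mulr_sc).
rewrite R5 ?(mulr_scsc, mulr_sc).
move: (X1 * (XW * X2)) (X3 * XW) => A B.
pose L := L4 A B 0 0.
have hA : A = L (1,0,0,0) by exact: L4_A.
have hB : B = L (0,1,0,0) by exact: L4_B.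
rewrite hA hB /L.
rewrite !(L4_scale, L4_sub, L4_add, L4_opp); apply: L4_eq; rewrite /kap /p /=; field; side.
Qed.
End Rels.


Section Span.
Variable k : fieldType.
Variable q : k.
Hypothesis q0 : q != 0.
Hypothesis hp1 : q ^+ 2 != 1.
Hypothesis hp2 : q ^+ 4 != 1.
Local Notation Q := (Q q).
Local Notation pQ := (@pQ k q).
Local Notation sc := (@sc k q).
Local Notation X1 := (@X1 k q).
Local Notation X2 := (@X2 k q).
Local Notation X3 := (@X3 k q).
Local Notation XW := (@XW k q).
Local Notation p := (@p k q).

Definition idx := (nat * bool * nat * nat)%type.
Definition pbw (m : idx) : Q :=
  X1 ^+ m.1.1.1 * (if m.1.1.2 then X3 else 1) * XW ^+ m.1.2 * X2 ^+ m.2.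
Definition lin (s : seq (k * idx)) : Q := \sum_(x <- s) sc x.1 * pbw x.2.
Definition spanned (x : Q) := exists s, x = lin s.

Lemma sp0 : spanned 0. Proof. by exists [::]; rewrite /lin big_nil. Qed.
Lemma spD x y : spanned x -> spanned y -> spanned (x + y).
Proof. by move=> [s ->] [t ->]; exists (s ++ t); rewrite /lin big_cat. Qed.
Lemma spZ c x : spanned x -> spanned (sc c * x).
Proof.
move=> [s ->]; exists [seq (c * y.1, y.2) | y <- s].
rewrite /lin big_map mulr_sumr; apply: eq_bigr => y _ /=.
by rewrite mulr_scsc.
Qed.
Lemma spN x : spanned x -> spanned (- x).
Proof. by move=> h; rewrite -scN1; apply: spZ. Qed.
Lemma spB x y : spanned x -> spanned y -> spanned (x - y).
Proof. by move=> hx hy; apply: spD => //; apply: spN. Qed.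
Lemma sp_pbw m : spanned (pbw m).
Proof. by exists [:: (1, m)]; rewrite /lin big_seq1 sc1 mul1r. Qed.
Lemma spM y : (forall m, spanned (y * pbw m)) -> forall x, spanned x -> spanned (y * x).
Proof.
move=> H x [s ->]; elim: s => [|a s IH]; first by rewrite /lin big_nil mulr0; apply: sp0.
rewrite /lin big_cons mulrDr; apply: spD => //.
by rewrite mulr_sc; apply: spZ.
Qed.

Lemma pbwE a e c d : pbw (a, e, c, d) = X1 ^+ a * (if e then X3 else 1) * XW ^+ c * X2 ^+ d.
Proof. by []. Qed.

Lemma X1_pbw m : spanned (X1 * pbw m).
Proof.
case: m => [[[a e] c] d]; rewrite !pbwE !mulrA -exprS.
by apply: (sp_pbw (a.+1, e, c, d)).
Qed.

Lemma X3_X1n a : X3 * X1 ^+ a = sc (p ^+ a) * (X1 ^+ a * X3).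
Proof.
elim: a => [|a IH]; first by rewrite !expr0 sc1 mul1r mulr1 mul1r.
by rewrite exprS mulrA R1 // -!mulrA IH mulr_sc mulr_scsc -exprS.
Qed.

Lemma X3_pbw m : spanned (X3 * pbw m).
Proof.
case: m => [[[a e] c] d]; rewrite !pbwE !mulrA X3_X1n // -!mulrA; apply: spZ.
case: e.
  rewrite !mulrA -[X1 ^+ a * X3 * X3]mulrA R3 // -!mulrA mulr_sc; apply: spZ.
  rewrite !mulrA -exprSr -[X1 ^+ a.+1 * XW * XW ^+ c]mulrA -exprS -mulrA.
  have -> : X1 ^+ a.+1 * (XW ^+ c.+1 * X2 ^+ d) = pbw (a.+1, false, c.+1, d).
    by rewrite pbwE mulr1 mulrA.
  exact: sp_pbw.
rewrite mul1r.
have -> : X1 ^+ a * (X3 * (XW ^+ c * X2 ^+ d)) = pbw (a, true, c, d).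
  by rewrite pbwE !mulrA.
exact: sp_pbw.
Qed.

Lemma X2_XWn c : X2 * XW ^+ c = sc (p ^+ c) * (XW ^+ c * X2).
Proof.
elim: c => [|c IH]; first by rewrite !expr0 sc1 mul1r mulr1 mul1r.
by rewrite exprS mulrA R5 // -!mulrA IH mulr_sc mulr_scsc -exprS.
Qed.

Lemma X2_pbw m : spanned (X2 * pbw m).
Proof.
case: m => [[[a e] c] d]; elim: a => [|a IH].
  rewrite pbwE expr0 mul1r.
  have H0 : spanned (X2 * (XW ^+ c * X2 ^+ d)).
    rewrite mulrA X2_XWn // -!mulrA; apply: spZ; rewrite -exprS.
    have -> : XW ^+ c * X2 ^+ d.+1 = pbw (0, false, c, d.+1) by rewrite pbwE expr0 !mul1r.
    exact: sp_pbw.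
  case: e; last by rewrite mul1r.
  rewrite -!mulrA mulrA R6 mulrDl; apply: spD.
    rewrite -mulrA; apply: (spM X3_pbw); exact: H0.
  rewrite mulrA -exprS.
  have -> : XW ^+ c.+1 * X2 ^+ d = pbw (0, false, c.+1, d) by rewrite pbwE expr0 !mul1r.
  exact: sp_pbw.
have -> : pbw (a.+1, e, c, d) = X1 * pbw (a, e, c, d) by rewrite !pbwE !mulrA -exprS.
rewrite mulrA R0 // mulrBl -!mulrA; apply: spB; apply: spZ.
  by apply: (spM X1_pbw).
exact: X3_pbw.
Qed.

Lemma spanned_all (t : term k) : spanned (pQ t).
Proof.
suff H : forall x, spanned x -> spanned (pQ t * x).
  rewrite -[pQ t]mulr1; apply: H.
  by have := sp_pbw (0, false, 0, 0); rewrite pbwE !expr0 !mulr1.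
elim: t => [c| | |a IHa b IHb|a IHa b IHb] x hx.
- by apply: spZ.
- exact: (spM X1_pbw).
- exact: (spM X2_pbw).
- by rewrite pQ_add mulrDl; apply: spD; [apply: IHa|apply: IHb].
- by rewrite pQ_mul -mulrA; apply: IHa; apply: IHb.
Qed.
End Span.


Section Model.
Variable k : fieldType.
Variable q : k.
Hypothesis q0 : q != 0.
Hypothesis hp1 : q ^+ 2 != 1.
Hypothesis hp2 : q ^+ 4 != 1.
Local Notation p := (@p k q).
Local Notation kap := (@kap k q).

Lemma p0 : p != 0. Proof. by rewrite /p expf_neq0. Qed.
Definition pw (n : int) : k := p ^ n.
Lemma pwD x y : pw (x + y) = pw x * pw y. Proof. by rewrite /pw expfzDr // p0. Qed.
Lemma pwN x : pw (- x) = (pw x)^-1. Proof. by rewrite /pw invr_expz. Qed.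
Lemma pw1 : pw 1 = p. Proof. by []. Qed.
Lemma pw0 : pw 0 = 1. Proof. by []. Qed.
Lemma pw_neq0 x : pw x != 0. Proof. by rewrite /pw expfz_neq0 // p0. Qed.

Definition vec := int -> bool -> int -> int -> k.
Definition al (a c : int) := pw c * pw (- a).
Definition ga (a : int) := (pw a - pw (- a)) / (p ^+ 2 - 1).
Definition be (a : int) := (pw (a + 1) - pw (- a)) / (p - 1).
Definition E1 (v : vec) : vec := fun a e c d => v (a - 1) e c d.
Definition E2 (v : vec) : vec := fun a e c d =>
  if e then al a c * v a true c (d - 1) - ga (a + 1) * v (a + 1) false c d
  else al a c * v a false c (d - 1) + be a * v a true (c - 1) d.
Definition E3o (v : vec) : vec := fun a e c d =>
  if e then pw a * v a false c d else kap * pw (a - 1) * v (a - 1) true (c - 1) d.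
Definition Wo (v : vec) : vec := fun a e c d =>
  pw a * pw a * (if e then p else 1) * v a e (c - 1) d.

Fixpoint phi (t : term k) (v : vec) : vec :=
  match t with
  | TC x => fun a e c d => x * v a e c d
  | TE1 => E1 v
  | TE2 => E2 v
  | TAdd s t => fun a e c d => phi s v a e c d + phi t v a e c d
  | TMul s t => phi s (phi t v)
  end.

Lemma nzp1 : p - 1 != 0. Proof. by rewrite subr_eq0. Qed.
Lemma nzp2 : p ^+ 2 - 1 != 0. Proof. by rewrite subr_eq0 /p -exprM. Qed.

Lemma nzE : q ^+ 2 ^+ 2 - 1 != 0. Proof. by rewrite -exprM subr_eq0. Qed.
Lemma nzF : q ^+ 2 - 1 != 0. Proof. by rewrite subr_eq0. Qed.
Lemma nzG : q ^+ 2 + 1 != 0.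
Proof. apply: contra hp2 => /eqP H; apply/eqP.
have -> : q ^+ 4 = (q ^+ 2 + 1) * (q ^+ 2 - 1) + 1 by ring.
by rewrite H mul0r add0r. Qed.
Ltac norm := rewrite /al /ga /be /kap ?(subrK, addrK); rewrite ?(pwD, pwN, pw1, pw0) /p.
Ltac sideM := rewrite ?pw_neq0 ?q0 ?nzA ?nzB ?nzC ?nzE ?nzF ?nzG /=; try done.

Lemma phi_e3 v : phi (e3 q) v = E3o v.
Proof.
apply: functional_extensionality => a; apply: functional_extensionality => e; apply: functional_extensionality => c; apply: functional_extensionality => d.
rewrite /= /E1 /E2 /E3o; case: e; norm; field; sideM.
Qed.

Lemma phi_e3f : phi (e3 q) = E3o.
Proof. by apply: functional_extensionality => v; apply: phi_e3. Qed.

Lemma phi_w v : phi (w q) v = Wo v.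
Proof.
rewrite /w /tsub /tscale; cbn -[e3]; rewrite phi_e3f.
apply: functional_extensionality => a; apply: functional_extensionality => e; apply: functional_extensionality => c; apply: functional_extensionality => d.
rewrite /E2 /E3o /Wo; case: e; norm; field; sideM.
Qed.

Lemma phi_wf : phi (w q) = Wo.
Proof. by apply: functional_extensionality => v; apply: phi_w. Qed.

Ltac fext := apply: functional_extensionality => i1; apply: functional_extensionality => i2;
  apply: functional_extensionality => i3; apply: functional_extensionality => i4.

Lemma phi_z v : phi (z' q) v = phi (TC 0) v.
Proof.
rewrite /z' /tsub /tscale; cbn -[w]; rewrite phi_wf; fext.
rewrite /E1 /Wo; case: i2; norm; field; sideM.
Qed.

Lemma phi_S1 v : phi (S1 q) v = phi (TC 0) v.
Proof.
rewrite /S1 /tsub /tscale /=; fext.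
rewrite /E1 /E2; case: i2; norm; field; sideM.
Qed.

Lemma phi_S2 v : phi (S2 q) v = phi (TC 0) v.
Proof.
rewrite /S2 /tsub /tscale /=; fext.
rewrite /E1 /E2; case: i2; norm; field; sideM.
Qed.

Definition vadd (v1 v2 : vec) : vec := fun a e c d => v1 a e c d + v2 a e c d.
Definition vscale (x : k) (v : vec) : vec := fun a e c d => x * v a e c d.

Lemma phi_add t v1 v2 : phi t (vadd v1 v2) = vadd (phi t v1) (phi t v2).
Proof.
elim: t v1 v2 => [x| | |s IHs t IHt|s IHs t IHt] v1 v2 /=.
- by fext; rewrite /vadd mulrDr.
- by fext.
- fext; rewrite /E2 /vadd; case: i2; ring.
- by fext; rewrite IHs IHt /vadd addrACA.
- by rewrite IHt IHs.
Qed.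

Lemma phi_scale t x v : phi t (vscale x v) = vscale x (phi t v).
Proof.
elim: t v => [y| | |s IHs t IHt|s IHs t IHt] v /=.
- by fext; rewrite /vscale mulrCA.
- by fext.
- fext; rewrite /E2 /vscale; case: i2; ring.
- by fext; rewrite IHs IHt /vscale mulrDr.
- by rewrite IHt IHs.
Qed.

Lemma UQ_phi a0 b0 : UQ_eq q a0 b0 -> forall v, phi a0 v = phi b0 v.
Proof.
elim=> //=.
- by move=> a b c _ IH1 _ IH2 v; rewrite IH1 IH2.
- by move=> a a' b b' _ IH1 _ IH2 v; fext; rewrite IH1 IH2.
- by move=> a a' b b' _ IH1 _ IH2 v; rewrite IH2 IH1.
- by move=> a b c v; fext; rewrite addrA.
- by move=> a b v; fext; rewrite addrC.
- by move=> a v; fext; rewrite !mul0r addr0.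
- by move=> a v; fext; rewrite mulN1r subrr mul0r.
- by move=> a v; fext; rewrite mul1r.
- move=> a v; congr (phi a); by fext; rewrite mul1r.
- move=> a b c v; exact: phi_add.
- by move=> x y v; fext; rewrite mulrDl.
- by move=> x y v; fext; rewrite mulrA.
- by move=> x a v; have := phi_scale a x v; rewrite /vscale => ->.
- move=> r [->|[->|->]] v; [exact: phi_S1|exact: phi_S2|exact: phi_z].
Qed.
End Model.


Local Arguments e3 : simpl never.
Local Arguments w : simpl never.

Section Lead.
Variable k : fieldType.
Variable q : k.
Hypothesis q0 : q != 0.
Hypothesis hp1 : q ^+ 2 != 1.
Hypothesis hp2 : q ^+ 4 != 1.
Local Notation p := (@p k q).
Local Notation kap := (@kap k q).
Local Notation vec := (vec k).
Local Notation E1 := (@E1 k).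
Local Notation E2 := (@E2 k q).
Local Notation E3o := (@E3o k q).
Local Notation Wo := (@Wo k q).
Local Notation pw := (@pw k q).

Definition ltk (x y : int * int * int) : bool :=
  (x.1.1 < y.1.1) || ((x.1.1 == y.1.1) && ((x.1.2 < y.1.2) || ((x.1.2 == y.1.2) && (x.2 < y.2)))).
Definition kadd (x y : int * int * int) := (x.1.1 + y.1.1, x.1.2 + y.1.2, x.2 + y.2).
Definition keyv (a : int) (e : bool) (c d : int) : int * int * int := (d, 2 * a + e, 2 * c + e).
Definition below (u : vec) a e c d :=
  forall a' e' c' d', ltk (keyv a e c d) (keyv a' e' c' d') -> u a' e' c' d' = 0.
Definition good (O : vec -> vec) (s : int * int * int) :=
  forall u a e c d, below u a e c d -> exists a' e' c' d',
    [/\ keyv a' e' c' d' = kadd (keyv a e c d) s, below (O u) a' e' c' d' &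
        (O u a' e' c' d' == 0) = (u a e c d == 0)].

Lemma good_comp O1 O2 s1 s2 : good O1 s1 -> good O2 s2 -> good (fun u => O1 (O2 u)) (kadd s2 s1).
Proof.
move=> g1 g2 u a e c d hb.
have [a2 [e2 [c2 [d2 [k2 b2 z2]]]]] := g2 u a e c d hb.
have [a1 [e1 [c1 [d1 [k1 b1 z1]]]]] := g1 _ a2 e2 c2 d2 b2.
exists a1, e1, c1, d1; split => //; last by rewrite z1 z2.
rewrite k1 k2 /kadd /=; congr (_, _, _); ring.
Qed.

Definition kmul (n : nat) (s : int * int * int) := (n%:Z * s.1.1, n%:Z * s.1.2, n%:Z * s.2).

Lemma good_id : good id (0, 0, 0).
Proof.
move=> u a e c d hb; exists a, e, c, d; split => //.
by rewrite /kadd; case: (keyv a e c d) => [[x y] z] /=; rewrite !addr0.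
Qed.

Lemma good_iter n O s : good O s -> good (iter n O) (kmul n s).
Proof.
move=> g; elim: n => [|n IH].
  by have := good_id; rewrite /kmul /= !mul0r.
move=> u a e c d hb.
have [a' [e' [c' [d' [h1 h2 h3]]]]] := good_comp g IH hb.
exists a', e', c', d'; split => //; rewrite h1 /kadd /kmul /=; congr (_, _, _); rewrite intS; ring.
Qed.

Lemma good_E1 : good E1 (0, 2, 0).
Proof.
move=> u a e c d hb; exists (a + 1), e, c, d; split.
- by rewrite /keyv /kadd /=; congr (_, _, _); ring.
- move=> a' e' c' d' hl; rewrite /E1; apply: hb.
  by move: hl; rewrite /ltk /keyv /=; case: e; case: e'; lia.
- by rewrite /E1 addrK.
Qed.

Ltac klia := rewrite /ltk /keyv /=; lia.

Lemma al_neq0 a c : al q a c != 0.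
Proof. by rewrite /al mulf_neq0 // pw_neq0. Qed.

Lemma good_E2 : good E2 (1, 0, 0).
Proof.
move=> u a e c d hb; exists a, e, c, (d + 1); split.
- by rewrite /keyv /kadd /=; congr (_, _, _); ring.
- move=> a' e' c' d' hl; rewrite /E2; case: e' hl => hl.
    rewrite (hb a' true c' (d' - 1)) ?(hb (a' + 1) false c' d') ?mulr0 ?subrr //;
      move: hl; klia.
  rewrite (hb a' false c' (d' - 1)) ?(hb a' true (c' - 1) d') ?mulr0 ?addr0 //;
    move: hl; klia.
- rewrite /E2 addrK; case: e hb => hb.
    rewrite (hb (a + 1) false c (d + 1)); last klia.
    by rewrite mulr0 subr0 mulf_eq0 (negbTE (al_neq0 _ _)).
  rewrite (hb a true (c - 1) (d + 1)); last klia.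
  by rewrite mulr0 addr0 mulf_eq0 (negbTE (al_neq0 _ _)).
Qed.

Lemma kap_neq0 : kap != 0.
Proof. by rewrite /kap oppr_eq0 mulf_neq0 // ?p0 // /p nzG. Qed.

Lemma good_E3o : good E3o (0, 1, 1).
Proof.
move=> u a e c d hb; case: e hb => hb.
  exists (a + 1), false, (c + 1), d; split.
  - by rewrite /keyv /kadd /=; congr (_, _, _); ring.
  - move=> a' e' c' d' hl; rewrite /E3o; case: e' hl => hl.
      by rewrite (hb a' false c' d') ?mulr0 //; move: hl; klia.
    by rewrite (hb (a' - 1) true (c' - 1) d') ?mulr0 //; move: hl; klia.
  - by rewrite /E3o !addrK !mulf_eq0 (negbTE kap_neq0) (negbTE (pw_neq0 q0 _)).
exists a, true, c, d; split.
- by rewrite /keyv /kadd /=; congr (_, _, _); ring.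
- move=> a' e' c' d' hl; rewrite /E3o; case: e' hl => hl.
    by rewrite (hb a' false c' d') ?mulr0 //; move: hl; klia.
  by rewrite (hb (a' - 1) true (c' - 1) d') ?mulr0 //; move: hl; klia.
- by rewrite /E3o !mulf_eq0 (negbTE (pw_neq0 q0 _)).
Qed.

Lemma good_Wo : good Wo (0, 0, 2).
Proof.
move=> u a e c d hb; exists a, e, (c + 1), d; split.
- by rewrite /keyv /kadd /=; congr (_, _, _); ring.
- move=> a' e' c' d' hl; rewrite /Wo (hb a' e' (c' - 1) d') ?mulr0 //.
  by move: hl; klia.
- rewrite /Wo addrK !mulf_eq0 (negbTE (pw_neq0 q0 _)) /=.
  case: (e) => /=; last by rewrite oner_eq0.
  by rewrite (negbTE (p0 q0)) orFb.
Qed.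

Fixpoint tpow (x : term k) (n : nat) : term k :=
  if n is n'.+1 then TMul x (tpow x n') else TC 1.
Definition tpbw (m : idx) : term k :=
  TMul (tpow TE1 m.1.1.1) (TMul (if m.1.1.2 then e3 q else TC 1)
    (TMul (tpow (w q) m.1.2) (tpow TE2 m.2))).

Ltac fext := apply: functional_extensionality => i1; apply: functional_extensionality => i2;
  apply: functional_extensionality => i3; apply: functional_extensionality => i4.

Lemma phi_TC1 v : phi q (TC 1) v = v.
Proof. by fext; rewrite /= mul1r. Qed.

Lemma phi_tpow x n v : phi q (tpow x n) v = iter n (phi q x) v.
Proof. by elim: n => [|n IH]; [exact: phi_TC1|rewrite /= IH]. Qed.

Lemma phi_mul a b v : phi q (TMul a b) v = phi q a (phi q b v). Proof. by []. Qed.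

Definition Eopt (e : bool) : vec -> vec := if e then E3o else id.

Lemma phi_tpbw m v : phi q (tpbw m) v =
  iter m.1.1.1 E1 (Eopt m.1.1.2 (iter m.1.2 Wo (iter m.2 E2 v))).
Proof.
case: m => [[[a e] c] d]; rewrite /tpbw !phi_mul !phi_tpow (phi_wf q0 hp1 hp2).
by case: e; rewrite /Eopt ?(phi_e3f q0 hp1 hp2) ?phi_TC1.
Qed.

Lemma good_P (m : idx) : good (phi q (tpbw m)) (keyv m.1.1.1 m.1.1.2 m.1.2 m.2).
Proof.
have -> : phi q (tpbw m) = fun v => iter m.1.1.1 E1 (Eopt m.1.1.2 (iter m.1.2 Wo (iter m.2 E2 v))).
  by apply: functional_extensionality => v; apply: phi_tpbw.
case: m => [[[a e] c] d] /=.
have gE : good (Eopt e) (0, e%:Z, e%:Z).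
  by case: e; [exact: good_E3o|exact: good_id].
have g := good_comp (good_iter a good_E1) (good_comp gE (good_comp (good_iter c good_Wo) (good_iter d good_E2))).
move=> u a0 e0 c0 d0 hb.
have [a' [e' [c' [d' [h1 h2 h3]]]]] := g u a0 e0 c0 d0 hb.
exists a', e', c', d'; split; [|exact: h2|exact: h3].
rewrite h1 /kadd /kmul /keyv /=; congr (_, _, _); ring.
Qed.

Definition dl (a : int) (e : bool) (c d : int) : vec :=
  fun a' e' c' d' => if [&& a' == a, e' == e, c' == c & d' == d] then 1 else 0.

Lemma ga0 : ga q 0 = 0.
Proof. by rewrite /ga oppr0 subrr mul0r. Qed.
Lemma al00 : al q 0 0 = 1.
Proof. by rewrite /al oppr0 !pw0 mulr1. Qed.

Lemma E1_dl a e c d : E1 (dl a e c d) = dl (a + 1) e c d.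
Proof. by fext; rewrite /E1 /dl subr_eq. Qed.

Lemma E2_dl d : E2 (dl 0 false 0 d) = dl 0 false 0 (d + 1).
Proof.
fext; rewrite /E2 /dl; case: i2 => /=; rewrite ?andbF ?andFb.
  have [->|h] := eqVneq (i1 + 1) 0; first by rewrite ga0 !mul0r mulr0 subrr.
  by rewrite mulr0 mulr0 subrr.
rewrite mulr0 addr0 subr_eq.
case: ifP => [/and3P [/eqP -> /eqP -> _]|_]; last by rewrite mulr0.
by rewrite al00 mulr1.
Qed.

Lemma Wo_dl c d : Wo (dl 0 false c d) = dl 0 false (c + 1) d.
Proof.
fext; rewrite /Wo /dl subr_eq; case: i2 => /=; rewrite ?andbF ?andFb ?mulr0 //.
case: ifP => [/and3P [/eqP -> _ _]|_]; last by rewrite mulr0.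
by rewrite pw0 !mul1r.
Qed.

Lemma E3_dl c d : E3o (dl 0 false c d) = dl 0 true c d.
Proof.
fext; rewrite /E3o /dl; case: i2 => /=; rewrite ?andbF ?andFb ?mulr0 //.
case: ifP => [/and3P [/eqP -> _ _]|_]; last by rewrite mulr0.
by rewrite pw0 mulr1.
Qed.

Lemma iter_E2 (d : nat) : iter d E2 (dl 0 false 0 0) = dl 0 false 0 d.
Proof. elim: d => [|d IH] //=; by rewrite IH E2_dl intS addrC. Qed.
Lemma iter_Wo (c d : nat) : iter c Wo (dl 0 false 0 d) = dl 0 false c d.
Proof. elim: c => [|c IH] //=; by rewrite IH Wo_dl intS addrC. Qed.
Lemma iter_E1 (a : nat) e (c d : nat) : iter a E1 (dl 0 e c d) = dl a e c d.
Proof. elim: a => [|a IH] //=; by rewrite IH E1_dl intS addrC. Qed.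

Lemma phi_tpbw_dl (m : idx) : phi q (tpbw m) (dl 0 false 0 0) = dl m.1.1.1 m.1.1.2 m.1.2 m.2.
Proof.
rewrite phi_tpbw iter_E2 iter_Wo; case: m => [[[a e] c] d] /=.
by case: e; rewrite /Eopt ?E3_dl iter_E1.
Qed.
End Lead.


Section Final.
Variable k : fieldType.
Variable q : k.
Hypothesis q0 : q != 0.
Hypothesis hp1 : q ^+ 2 != 1.
Hypothesis hp2 : q ^+ 4 != 1.
Local Notation Q := (Q q).
Local Notation pQ := (@pQ k q).
Local Notation sc := (@sc k q).
Local Notation pbw := (@pbw k q).
Local Notation lin := (@lin k q).
Local Notation tpbw := (@tpbw k q).
Local Notation phi := (@phi k q).
Local Notation dl := (@dl k).

Lemma pQ_tpow x n : pQ (tpow x n) = pQ x ^+ n.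
Proof. by elim: n => [|n IH] //=; rewrite pQ_mul IH exprS. Qed.

Lemma pQ_tpbw m : pQ (tpbw m) = pbw m.
Proof.
case: m => [[[a e] c] d]; rewrite /tpbw /pbw !pQ_mul !pQ_tpow (pQ_w q) !mulrA /=.
by case: e; rewrite ?(pQ_e3 q) //= mulr1.
Qed.

Definition tlc (r : seq idx) (f : idx -> k) : term k :=
  foldr (fun m t => TAdd (TMul (TC (f m)) (tpbw m)) t) (TC 0) r.

Lemma pQ_tlc r f : pQ (tlc r f) = \sum_(m <- r) sc (f m) * pbw m.
Proof.
elim: r => [|m r IH] /=; first by rewrite big_nil.
by rewrite big_cons pQ_add pQ_mul IH pQ_tpbw.
Qed.

Lemma phi_tlc r f v a e c d :
  phi (tlc r f) v a e c d = \sum_(m <- r) f m * phi (tpbw m) v a e c d.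
Proof.
elim: r => [|m r IH] /=; first by rewrite big_nil mul0r.
by rewrite big_cons IH.
Qed.

Lemma normA (s : seq (k * idx)) : exists r f, uniq r /\ lin s = \sum_(m <- r) sc (f m) * pbw m.
Proof.
elim: s => [|x s [r [f [ur IH]]]].
  by exists [::], (fun _ => 0); rewrite /lin !big_nil.
rewrite /lin big_cons -/(lin s) IH.
case: x => [xc xm] /=.
case hin: (xm \in r).
  exists r, (fun m => if m == xm then f m + xc else f m); split => //.
  rewrite (bigD1_seq xm) //= (bigD1_seq xm hin ur) /= eqxx.
  have -> : \sum_(i <- r | i != xm) sc (if i == xm then f i + xc else f i) * pbw i =
            \sum_(i <- r | i != xm) sc (f i) * pbw i by apply: eq_bigr => i /negbTE ->.
  by rewrite scD mulrDl addrA [sc xc * _ + _]addrC.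
exists (xm :: r), (fun m => if m == xm then xc else f m); split.
  by rewrite /= hin.
rewrite big_cons eqxx; congr (_ + _).
apply: eq_big_seq => m hm; suff /negbTE -> : m != xm by [].
by apply: contraTneq hm => ->; rewrite hin.
Qed.

Lemma normB (s : seq (k * idx)) : exists r f, [/\ uniq r, (forall m, m \in r -> f m != 0) &
  lin s = \sum_(m <- r) sc (f m) * pbw m].
Proof.
have [r [f [ur ->]]] := normA s.
exists [seq m <- r | f m != 0], f; split.
- exact: filter_uniq.
- by move=> m; rewrite mem_filter => /andP [].
rewrite big_filter [RHS]big_mkcond; apply: eq_bigr => m _.
by case: ifP => // /negbFE/eqP ->; rewrite sc0 mul0r.
Qed.

Lemma span_term t : exists r f, [/\ uniq r, (forall m, m \in r -> f m != 0) & UQ_eq q t (tlc r f)].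
Proof.
have [s hs] := spanned_all q0 hp1 t.
have [r [f [ur nz hl]]] := normB s.
exists r, f; split => //; apply/pQ_eq.
by rewrite hs hl pQ_tlc.
Qed.

Lemma ltk_irr x : ~~ ltk x x.
Proof. case: x => [[x1 x2] x3]; rewrite /ltk /=; lia. Qed.
Lemma ltk_asym x y : ltk x y -> ~~ ltk y x.
Proof. case: x => [[x1 x2] x3]; case: y => [[y1 y2] y3]; rewrite /ltk /=; lia. Qed.
Lemma ltk_trans x y z : ltk x y -> ltk y z -> ltk x z.
Proof. case: x => [[x1 x2] x3]; case: y => [[y1 y2] y3]; case: z => [[z1 z2] z3]; rewrite /ltk /=; lia. Qed.
Lemma ltk_total x y : x != y -> ltk x y || ltk y x.
Proof.
case: x => [[x1 x2] x3]; case: y => [[y1 y2] y3] hne.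
apply/negPn/negP => H; move/eqP: hne; apply.
move: H; rewrite /ltk /= => H.
have e1 : x1 = y1 by lia.
have e2 : x2 = y2 by lia.
have e3 : x3 = y3 by lia.
by rewrite e1 e2 e3.
Qed.
Lemma ltk_add t x y : ltk x y -> ltk (kadd t x) (kadd t y).
Proof. case: t => [[t1 t2] t3]; case: x => [[x1 x2] x3]; case: y => [[y1 y2] y3]; rewrite /ltk /kadd /=; lia. Qed.

Definition kidx (m : idx) := keyv m.1.1.1%:Z m.1.1.2 m.1.2%:Z m.2%:Z.
Lemma kidx_inj : injective kidx.
Proof.
move=> [[[a e] c] d] [[[a' e'] c'] d']; rewrite /kidx /keyv /= => [[hd hx hy]].
case: e e' hx hy => [] [] /= hx hy; try lia;
  (have ea : a = a' by lia); (have ec : c = c' by lia); (have ed : d = d' by lia);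
  by rewrite ea ec ed.
Qed.

Lemma argmax (r : seq idx) : r != [::] ->
  exists2 m0, m0 \in r & forall m, m \in r -> m != m0 -> ltk (kidx m) (kidx m0).
Proof.
elim: r => [//|m r IH] _.
case: r IH => [|m' r'] IH.
  exists m; first by rewrite mem_head.
  by move=> x; rewrite mem_seq1 => /eqP ->; rewrite eqxx.
have [m0 h0 hmax] := IH isT.
case hl: (ltk (kidx m0) (kidx m)).
  exists m; first by rewrite mem_head.
  move=> x; rewrite in_cons => /orP [/eqP -> | hx]; first by rewrite eqxx.
  move=> _; have [-> //|hne] := eqVneq x m0.
  exact: ltk_trans (hmax x hx hne) hl.
exists m0; first by rewrite in_cons h0 orbT.
move=> x; rewrite in_cons => /orP [/eqP -> | hx] hne; last exact: hmax.
have : kidx m != kidx m0 by apply: contra hne => /eqP /kidx_inj ->.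
by move/ltk_total; rewrite hl orbF.
Qed.

Lemma tlc_nil f : tlc [::] f = TC 0. Proof. by []. Qed.

Lemma domain a b : UQ_eq q (TMul a b) (TC 0) -> UQ_eq q a (TC 0) \/ UQ_eq q b (TC 0).
Proof.
move=> H.
have [ra [fa [ua nza Ha]]] := span_term a.
have [rb [fb [ub nzb Hb]]] := span_term b.
have [ra0|ra0] := eqVneq ra [::]; first by left; move: Ha; rewrite ra0.
have [rb0|rb0] := eqVneq rb [::]; first by right; move: Hb; rewrite rb0.
exfalso.
have [m0 hm0 maxa] := argmax ra0.
have [n0 hn0 maxb] := argmax rb0.
pose dl0 := dl 0 false 0 0.
pose u := phi b dl0.
have hu : u = phi (tlc rb fb) dl0 by apply: (UQ_phi q0 hp1 hp2 Hb).
have uval : forall a' e' c' d', u a' e' c' d' =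
    \sum_(n <- rb) fb n * dl n.1.1.1 n.1.1.2 n.1.2 n.2 a' e' c' d'.
  by move=> a' e' c' d'; rewrite hu phi_tlc; apply: eq_bigr => n _; rewrite phi_tpbw_dl.
have hbel : below u n0.1.1.1 n0.1.1.2 n0.1.2 n0.2.
  move=> a' e' c' d' hl; rewrite uval big1_seq // => n /andP [_ hn].
  rewrite /dl; case: ifP => [/and4P [/eqP ea /eqP ee /eqP ec /eqP ed]|_]; last by rewrite mulr0.
  exfalso; move: hl; rewrite ea ee ec ed -/(kidx n0) -/(kidx n) => hl.
  have [en|nen] := eqVneq n n0; first by rewrite en (negbTE (ltk_irr _)) in hl.
  by move: (ltk_asym (maxb n hn nen)); rewrite hl.
have hu0 : u n0.1.1.1 n0.1.1.2 n0.1.2 n0.2 != 0.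
  rewrite uval (bigD1_seq n0) //= big1_seq.
    by rewrite /dl !eqxx /= mulr1 addr0 nzb.
  move=> n /andP [nen hn]; rewrite /dl; case: ifP => [/and4P [/eqP ea /eqP ee /eqP ec /eqP ed]|_]; last by rewrite mulr0.
  exfalso; move/eqP: nen; apply; apply: kidx_inj.
  by rewrite /kidx /keyv -ea -ee -ec -ed.
have [a1 [e1 [c1 [d1 [hk1 hb1 hz1]]]]] := good_P q0 hp1 hp2 m0 hbel.
have H1 := UQ_phi q0 hp1 hp2 H dl0.
have H2 : phi (TMul a b) dl0 = phi (tlc ra fa) u by rewrite /= (UQ_phi q0 hp1 hp2 Ha).
have H3 := f_equal (fun v => v a1 e1 c1 d1) (etrans (esym H2) H1).
move: H3; rewrite /= mul0r phi_tlc (bigD1_seq m0) // big1_seq.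
  rewrite Monoid.mulm1 => /eqP; rewrite mulf_eq0 (negbTE (nza _ hm0)) /= hz1.
  by rewrite (negbTE hu0).
move=> m /andP [nem hm].
have [a2 [e2 [c2 [d2 [hk2 hb2 _]]]]] := good_P q0 hp1 hp2 m hbel.
rewrite hb2 ?mulr0 //.
rewrite hk2 hk1; apply: ltk_add; exact: maxa.
Qed.
End Final.

Theorem mainTheorem13 (k : closedFieldType) (hchar : [pchar k] =i pred0)
  (q : k) (hq0 : q != 0) (hq : forall n : nat, (0 < n)%N -> q ^+ n != 1) :
  ~ UQ_eq q (TC 1) (TC 0) /\
  (forall a b : term k, UQ_eq q (TMul a b) (TC 0) ->
     UQ_eq q a (TC 0) \/ UQ_eq q b (TC 0)).
Proof.
have hp1 := hq 2%N isT.
have hp2 := hq 4%N isT.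
split.
  move=> H.
  have := UQ_phi hq0 hp1 hp2 H (fun _ _ _ _ => 1).
  move/(f_equal (fun v => v 0 false 0 0)) => /=.
  by rewrite mulr1 mul0r => /eqP; rewrite oner_eq0.
by move=> a b; apply: domain hq0 hp1 hp2 a b.
Qed.
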